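(* In the Setting, suppose that $r=\sqrt{K-\lambda_1}$ and $s=-\sqrt{K-\lambda_1}$. Then $c=m$ and \[ v=\frac{(-s)(n^2-1)}{n+s},\quad k=(-s)n,\quad \lambda=\mu=(-s)(n+s). \]
   Context: Setting: $\Gamma$ is a primitive strongly regular graph with parameters $(v,k,\lambda,\mu)$ (a $k$-regular graph on $v$ vertices, any two adjacent vertices having $\lambda$ and any two distinct non-adjacent vertices having $\mu$ common neighbours; primitive means $\Gamma$ and its complement are connected), with spectrum $k^1, r^f, s^g$ where $k>r>s$ and exponents are multiplicities. $C$ is a coclique in $\Gamma$ of size $c=\frac{vs}{s-k}$. A $K$-regular graph on $V$ vertices, neither complete nor edgeless, is a divisible design graph with parameters $(V,K,\lambda_1,\lambda_2;m,n)$ if its vertex set can be partitioned into $m$ canonical classes of size $n$ such that two distinct vertices in the same class have exactly $\lambda_1$ common neighbours and two vertices in different classes have exactly $\lambda_2$ common neighbours; it is proper unless $m=1$, $n=1$ or $\lambda_1=\lambda_2$. It is assumed that the subgraph $\Delta$ induced on $V(\Gamma)\setminus C$ is a proper divisible design graph with parameters $(V,K,\lambda_1,\lambda_2;m,n)$. *)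

(* Defs.v *)
From mathcomp Require Import all_boot all_order all_algebra.
Set Implicit Arguments. Unset Strict Implicit. Unset Printing Implicit Defensive.
Import Order.TTheory GRing.Theory Num.Theory.

Section Graphs.
Variables (T : finType) (e : rel T).

Definition simple_graph : Prop := symmetric e /\ irreflexive e.

Definition common_nbrs (D : {set T}) (x y : T) : nat :=
  #|[set z in D | e x z && e y z]|.

Definition srg (v k lam mu : nat) : Prop :=
  [/\ #|T| = v,
      forall x : T, #|[set y | e x y]| = k,
      forall x y : T, x != y -> e x y -> common_nbrs setT x y = lam
    & forall x y : T, x != y -> ~~ e x y -> common_nbrs setT x y = mu].

Definition compl_rel : rel T := fun x y => (x != y) && ~~ e x y.

Definition primitive : Prop :=
  (forall x y : T, connect e x y) /\ (forall x y : T, connect compl_rel x y).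

Definition adj_mx (R : nzRingType) : 'M[R]_#|T| :=
  \matrix_(i, j) ((e (enum_val i) (enum_val j))%:R)%R.

Definition coclique (C : {set T}) : Prop :=
  forall x y, x \in C -> y \in C -> ~~ e x y.

Definition is_ddg (D : {set T}) (V K l1 l2 m n : nat) : Prop :=
  [/\ #|D| = V,
      forall x, x \in D -> #|[set y in D | e x y]| = K,
      (exists x y, [/\ x \in D, y \in D, x != y & ~~ e x y]) ,
      (exists x y, [/\ x \in D, y \in D & e x y])
    & exists P : {set {set T}},
        [/\ partition P D, #|P| = m,
            forall B, B \in P -> #|B| = n
          & forall x y, x \in D -> y \in D -> x != y ->
              common_nbrs D x y = (if pblock P x == pblock P y then l1 else l2)]].

Definition is_proper_ddg (D : {set T}) (V K l1 l2 m n : nat) : Prop :=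
  [/\ is_ddg D V K l1 l2 m n, m != 1%N, n != 1%N & l1 != l2].

End Graphs.

(* Main.v *)
Require Import Defs.
From mathcomp Require Import all_boot all_order all_algebra.
From mathcomp Require Import ring lra zify.
Import Order.TTheory GRing.Theory Num.Theory.

Lemma card_sumN (T : finType) (p : pred T) :
  #|[set x | p x]| = \sum_x (p x : nat).
Proof.
rewrite -sum1dep_card big_mkcond /=; apply: eq_bigr => x _.
by case: (p x).
Qed.

Lemma dc1c (T : finType) (X : pred T) (P : T -> T -> bool) :
  \sum_(x | X x) #|[set z | P x z]| = \sum_z #|[set x | X x && P x z]|.
Proof.
rewrite big_mkcond /=.
rewrite (eq_bigr (fun x => \sum_z ((X x && P x z) : nat))); last first.
  move=> x _; rewrite card_sumN; case: (X x) => //=.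
  by rewrite big1.
rewrite exchange_big /=; apply: eq_bigr => z _; by rewrite card_sumN.
Qed.

Lemma dc2c (T : finType) (X : pred T) (P Q : T -> T -> bool) :
  \sum_(x | X x) #|[set z | P x z]| * #|[set w | Q x w]|
  = \sum_z \sum_w #|[set x | [&& X x, P x z & Q x w]]|.
Proof.
rewrite big_mkcond /=.
rewrite (eq_bigr (fun x => \sum_z \sum_w (([&& X x, P x z & Q x w]) : nat))); last first.
  move=> x _; rewrite !card_sumN; case: (X x) => /=; last by rewrite big1 // => z _; rewrite big1.
  rewrite big_distrl /=; apply: eq_bigr => z _; rewrite big_distrr /=.
  by apply: eq_bigr => w _; rewrite mulnb.
rewrite exchange_big /=; apply: eq_bigr => z _.
rewrite exchange_big /=; apply: eq_bigr => w _; by rewrite card_sumN.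
Qed.

Lemma card_split (T : finType) (p : pred T) (A : {set T}) :
  #|[set y | p y]| = #|[set y in A | p y]| + #|[set y in ~: A | p y]|.
Proof.
rewrite -(cardsID A [set y | p y]); congr (_ + _); apply: eq_card => y;
by rewrite !inE andbC.
Qed.

Local Open Scope ring_scope.

Lemma card_sumR (R : nzRingType) (T : finType) (p : pred T) :
  (#|[set x | p x]|%:R : R) = \sum_x (p x)%:R.
Proof.
rewrite -sum1dep_card natr_sum big_mkcond /=; apply: eq_bigr => x _.
by case: (p x).
Qed.

Lemma eig_rel (R : rcfType) (T : finType) (e : rel T) v k lam mu (a : R) :
  simple_graph e -> srg e v k lam mu -> eigenvalue (adj_mx e R) a -> a != k%:R ->
  a ^+ 2 = k%:R + lam%:R * a - mu%:R - mu%:R * a.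
Proof.
move=> [esym eirr] [_ hdeg hlam hmu] /eigenvalueP [u uA u0] ak.
set A := adj_mx e R in uA.
have Aij i j : A i j = (e (enum_val i) (enum_val j))%:R by rewrite mxE.
have rows i : \sum_j A i j = k%:R.
  rewrite -(hdeg (enum_val i)) card_sumR.
  rewrite (big_enum_val (fun y => (e (enum_val i) y)%:R : R)) /=.
  by apply: eq_bigr => j _; rewrite Aij.
set S := \sum_j u 0 j.
have S0 : S = 0.
  have : \sum_j (u *m A) 0 j = k%:R * S.
    rewrite (eq_bigr (fun j => \sum_i u 0 i * A i j)); last by move=> j _; rewrite mxE.
    rewrite exchange_big /= /S mulr_sumr; apply: eq_bigr => i _.
    by rewrite -mulr_sumr rows mulrC.
  rewrite uA (eq_bigr (fun j => a * u 0 j)); last by move=> j _; rewrite mxE.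
  rewrite -mulr_sumr -/S => /eqP; rewrite -subr_eq0 -mulrBl mulf_eq0 subr_eq0 (negPf ak) /=.
  by move/eqP.
have AA i j : (A *m A) i j = mu%:R + (lam%:R - mu%:R) * A i j + (k%:R - mu%:R) * (i == j)%:R.
  rewrite mxE.
  have -> : \sum_l A i l * A l j = (#|[set l | e (enum_val i) l && e l (enum_val j)]|%:R : R).
    rewrite card_sumR (big_enum_val (fun l => (e (enum_val i) l && e l (enum_val j))%:R : R)) /=.
    by apply: eq_bigr => l _; rewrite !Aij -natrM mulnb.
  have eirr' x : e x x = false by apply: eirr.
  case: (eqVneq i j) => [<-|ij].
    rewrite Aij eirr' /= mulr0 addr0 mulr1 addrC subrK.
    rewrite -(hdeg (enum_val i)); congr (_%:R); apply: eq_card => l; rewrite !inE.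
    by rewrite (esym l) andbb.
  have xy : enum_val i != enum_val j by rewrite (inj_eq enum_val_inj).
  have cm : #|[set l | e (enum_val i) l && e l (enum_val j)]| = common_nbrs e setT (enum_val i) (enum_val j).
    by apply: eq_card => l; rewrite !inE (esym l).
  rewrite cm mulr0 addr0 Aij; case E: (e _ _).
    by rewrite hlam // mulr1 addrC subrK.
  by rewrite hmu ?E // mulr0 addr0.
have [j uj] := rV0Pn _ u0.
have h1 : (u *m (A *m A)) 0 j = a ^+ 2 * u 0 j.
  by rewrite mulmxA uA -scalemxAl uA scalerA mxE expr2.
have h2 : (u *m (A *m A)) 0 j = ((lam%:R - mu%:R) * a + (k%:R - mu%:R)) * u 0 j.
  rewrite mxE (eq_bigr (fun i => mu%:R * u 0 i + (lam%:R - mu%:R) * (u 0 i * A i j)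
          + (k%:R - mu%:R) * (u 0 i * (i == j)%:R))); last first.
    by move=> i _; rewrite AA; ring.
  rewrite !big_split /= -!mulr_sumr -/S S0 mulr0 add0r.
  have -> : \sum_i u 0 i * A i j = a * u 0 j by have := congr1 (fun M : 'rV_#|T| => M 0 j) uA; rewrite !mxE.
  rewrite (bigD1 j) //= eqxx mulr1 big1 ?addr0; last by move=> i /negPf ->; rewrite mulr0.
  ring.
move: h1; rewrite h2 => /eqP; rewrite eq_sym -subr_eq0 -mulrBl mulf_eq0 (negPf uj) orbF subr_eq0 => /eqP ->.
ring.
Qed.

Lemma alg_main (R : comNzRingType) (c k n s mu V t : R) :
  (V - n) * t = s * (k - n) ->
  (V - n) * t ^+ 2 = s * (k - n) + s * (s - 1) * (mu - n) ->
  V * s = c * k -> (c - 1) * mu = k * (s - 1) ->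
  s * k * (k - s * n) * (c - s) ^+ 2 = 0.
Proof.
move=> /eqP; rewrite -subr_eq0 => /eqP h1.
move=> /eqP; rewrite -subr_eq0 => /eqP h2.
move=> /eqP; rewrite -subr_eq0 => /eqP h3.
move=> /eqP; rewrite -subr_eq0 => /eqP h4.
set Q := (k - n) + (s - 1) * (mu - n).
have E : s * k * (k - s * n) * (c - s) ^+ 2 =
  s * (c - 1) * ( - (V - n) * ((V - n) * t ^+ 2 - (s * (k - n) + s * (s - 1) * (mu - n)))
                  + ((V - n) * t - s * (k - n)) * ((V - n) * t + s * (k - n)))
  - (c - 1) * s * Q * (V * s - c * k)
  - s * (c * k - s * n) * (s - 1) * ((c - 1) * mu - k * (s - 1)).
  rewrite /Q; ring.
by rewrite E h1 h2 h3 h4; ring.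
Qed.

Lemma alg_hoff (R : comNzRingType) (c k v s mu : R) :
  c * (s + k) = v * s -> (v - 1) * mu + k = k * k -> s ^+ 2 = k - mu ->
  (k + s) * (c * mu - s * (k - s)) = 0.
Proof.
move=> /eqP; rewrite -subr_eq0 => /eqP h1.
move=> /eqP; rewrite -subr_eq0 => /eqP h2.
move=> /eqP; rewrite -subr_eq0 => /eqP h3.
have E : (k + s) * (c * mu - s * (k - s)) = mu * (c * (s + k) - v * s)
   + s * (((v - 1) * mu + k - k * k) + (s ^+ 2 - (k - mu))).
  ring.
by rewrite E h1 h2 h3; ring.
Qed.

Lemma alg_var (R : comNzRingType) (c k v s mu : R) :
  c * (s + k) = v * s -> c * mu = s * (k - s) -> s ^+ 2 = k - mu ->
  c * k + c * (c - 1) * mu - 2 * s * (c * k) + s ^+ 2 * (v - c) = 0.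
Proof.
move=> /eqP; rewrite -subr_eq0 => /eqP h1.
move=> /eqP; rewrite -subr_eq0 => /eqP h2.
move=> /eqP; rewrite -subr_eq0 => /eqP h3.
have E : c * k + c * (c - 1) * mu - 2 * s * (c * k) + s ^+ 2 * (v - c) =
  - s * (c * (s + k) - v * s) + c * (c * mu - s * (k - s)) - c * (s ^+ 2 - (k - mu)).
  ring.
by rewrite E h1 h2 h3; ring.
Qed.

Lemma alg_h4 (R : comNzRingType) (c k s mu : R) :
  c * mu = s * (k - s) -> s ^+ 2 = k - mu -> (c - 1) * mu = k * (s - 1).
Proof.
move=> /eqP; rewrite -subr_eq0 => /eqP h1.
move=> /eqP; rewrite -subr_eq0 => /eqP h2.
apply/eqP; rewrite -subr_eq0; apply/eqP.
have E : (c - 1) * mu - k * (s - 1) = (c * mu - s * (k - s)) - (s ^+ 2 - (k - mu)) by ring.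
by rewrite E h1 h2 subr0.
Qed.

Lemma alg_v (R : comNzRingType) (v k n s mu : R) :
  (v - 1) * mu + k = k * k -> mu = s * (n - s) -> k = s * n ->
  s * (v * (n - s) - s * (n ^+ 2 - 1)) = 0.
Proof.
move=> /eqP; rewrite -subr_eq0 => /eqP h1.
move=> /eqP; rewrite -subr_eq0 => /eqP h2.
move=> /eqP; rewrite -subr_eq0 => /eqP h3.
have E : s * (v * (n - s) - s * (n ^+ 2 - 1)) =
  ((v - 1) * mu + k - k * k) - (v - 1) * (mu - s * (n - s)) - (k - s * n)
  + (k - s * n) * (k + s * n) by ring.
by rewrite E h1 h2 h3; ring.
Qed.

Theorem mainTheorem8 (R : rcfType) (T : finType) (e : rel T)
    (v k lam mu : nat) (r s : R) (C : {set T})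
    (V K l1 l2 m n : nat) :
  simple_graph e ->
  srg e v k lam mu ->
  primitive e ->
  (forall a : R, eigenvalue (adj_mx e R) a <-> a \in [:: k%:R; r; s]) ->
  s < r -> r < k%:R ->
  coclique e C ->
  (#|C|%:R : R) = v%:R * s / (s - k%:R) ->
  is_proper_ddg e (~: C) V K l1 l2 m n ->
  r = Num.sqrt (K%:R - l1%:R) ->
  s = - Num.sqrt (K%:R - l1%:R) ->
  [/\ #|C| = m,
      (v%:R : R) = (- s) * (n%:R ^+ 2 - 1) / (n%:R + s),
      (k%:R : R) = (- s) * n%:R,
      (lam%:R : R) = (- s) * (n%:R + s)
    & (mu%:R : R) = (- s) * (n%:R + s)].
Proof.
move=> Hsim Hsrg _ Heig Hsr Hrk Hcoc Hc [Hddg Hm1 Hn1 Hl12] Hr Hs.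
have [esym eirr] := Hsim.
have [Hv hdeg hlam hmu] := Hsrg.
have [HV HK [x0 [y0 [x0D y0D x0y0 _]]] _ [P [HP HPm HPn HPc]]] := Hddg.
set sq := Num.sqrt (K%:R - l1%:R) in Hr Hs.
subst r s.
have sq_pos : 0 < sq by lra.
have eS : (- sq) ^+ 2 = k%:R + lam%:R * (- sq) - mu%:R - mu%:R * (- sq).
  apply: (@eig_rel R T e v k lam mu (- sq) Hsim Hsrg); first by apply/(Heig (- sq)); rewrite !inE eqxx !orbT.
  have hk : - sq < k%:R by lra.
  by rewrite lt_eqF.
have eR : sq ^+ 2 = k%:R + lam%:R * sq - mu%:R - mu%:R * sq.
  apply: (@eig_rel R T e v k lam mu sq Hsim Hsrg); first by apply/(Heig sq); rewrite !inE eqxx !orbT.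
  by rewrite lt_eqF.
have hlm : lam = mu.
  have h : (lam%:R - mu%:R) * (sq + sq) = 0 :> R.
    apply: (@eq_trans _ _ (sq ^+ 2 - (- sq) ^+ 2)); last by ring.
    by rewrite eR eS; ring.
  apply/eqP; rewrite -(eqr_nat R) -subr_eq0.
  move/eqP: h; rewrite mulf_eq0 => /orP [] // /eqP h'; exfalso; lra.
have ksig : sq ^+ 2 = k%:R - mu%:R by rewrite eR hlm; ring.
have esymb x y : e x y = e y x by apply: esym.
have eirr' x : e x x = false by apply: eirr.
have cocl x z : x \in C -> z \in C -> e x z = false.
  by move=> xC zC; apply/negbTE; apply: Hcoc.
have hND y z : z \in C -> e y z -> y \in ~: C.
  move=> zC eyz; rewrite inE; apply/negP => yC; by rewrite cocl in eyz.
have degz z : #|[set x | e x z]| = k.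
  by rewrite -(hdeg z); apply: eq_card => x; rewrite !inE esymb.
have comm x y : x != y -> #|[set z | e x z && e y z]| = mu.
  move=> xy; case E: (e x y).
  - by rewrite -hlm -(hlam x y xy E); apply: eq_card => z; rewrite !inE.
  - by rewrite -(hmu x y xy (negbT E)); apply: eq_card => z; rewrite !inE.
pose a x := #|[set z in C | e x z]|.
have N0 x : x \in C -> a x = 0%N.
  move=> xC; apply/eqP; rewrite cards_eq0; apply/eqP/setP => z; rewrite !inE.
  by case zC: (z \in C) => //=; rewrite cocl.
have N1 : (\sum_x a x = #|C| * k)%N.
  rewrite /a (@dc1c _ predT (fun x z => (z \in C) && e x z)).
  rewrite (bigID (fun z => z \in C)) /= [X in (_ + X)%N]big1 ?addn0; last first.
    move=> z /negPf zC; apply/eqP; rewrite cards_eq0; apply/eqP/setP => x.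
    by rewrite !inE zC.
  rewrite (eq_bigr (fun _ => k)); last first.
    by move=> z zC; rewrite -(degz z); apply: eq_card => x; rewrite !inE zC.
  by rewrite sum_nat_const.
have N2 : (\sum_x a x * a x = #|C| * k + #|C| * (#|C| - 1) * mu)%N.
  rewrite /a (@dc2c _ predT (fun x z => (z \in C) && e x z) (fun x z => (z \in C) && e x z)).
  rewrite (bigID (fun z => z \in C)) /= [X in (_ + X)%N]big1 ?addn0; last first.
    move=> z /negPf zC; apply: big1 => w _; apply/eqP; rewrite cards_eq0; apply/eqP/setP => x.
    by rewrite !inE zC.
  rewrite (eq_bigr (fun _ => k + (#|C| - 1) * mu)%N); last first.
    move=> z zC; rewrite (bigD1 z) //=; congr (_ + _)%N.
      by rewrite -(degz z); apply: eq_card => x; rewrite !inE zC andbb.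
    rewrite (bigID (fun w => w \in C)) /= [X in (_ + X)%N]big1 ?addn0; last first.
      move=> w /andP [_ /negPf wC]; apply/eqP; rewrite cards_eq0; apply/eqP/setP => x.
      by rewrite !inE wC /= andbF.
    rewrite (eq_bigr (fun _ => mu)); last first.
      move=> w /andP [wz wC]; rewrite -(comm z w); last by rewrite eq_sym.
      by apply: eq_card => x; rewrite !inE zC wC /= (esymb x z) (esymb x w).
    rewrite (eq_bigl (fun w => w \in C :\ z)); last by move=> w; rewrite !inE andbC.
    by rewrite sum_nat_const (cardsD1 z C) zC add1n subn1.
  by rewrite sum_nat_const mulnDr mulnA.
have x0C : x0 \in ~: C by [].
have v_pos : (0 < v)%N by rewrite -Hv; apply/card_gt0P; exists x0.
have N3 : ((v - 1) * mu + k = k * k)%N.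
  have h := @dc1c _ predT (fun z y => e x0 y && e z y).
  have r1 : (\sum_x #|[set z | e x0 z && e x z]| = k * k)%N.
    rewrite h /= (bigID (fun y => e x0 y)) /= [X in (_ + X)%N]big1 ?addn0; last first.
      move=> y /negPf ey; apply/eqP; rewrite cards_eq0; apply/eqP/setP => z.
      by rewrite !inE ey.
    rewrite (eq_bigr (fun _ => k)); last first.
      by move=> y ey; rewrite -(degz y); apply: eq_card => z; rewrite !inE ey.
    rewrite (eq_bigl (fun y => y \in [set y | e x0 y])); last by move=> y; rewrite inE.
    by rewrite sum_nat_const hdeg.
  rewrite -r1 (bigD1 x0) //= addnC; congr (_ + _)%N.
    by rewrite -(hdeg x0); apply: eq_card => y; rewrite !inE andbb.
  rewrite (eq_bigr (fun _ => mu)); last first.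
    by move=> z zx; rewrite -(comm x0 z) // eq_sym.
  rewrite (eq_bigl (fun z => z \in [set z | z != x0])); last by move=> z; rewrite inE.
  rewrite sum_nat_const; congr (_ * _)%N.
  by rewrite -Hv subn1 -(cardC1 x0); apply: eq_card => z; rewrite !inE.
have SD1 : (\sum_(x in ~: C) a x = #|C| * k)%N.
  rewrite -N1 [RHS](bigID (fun x => x \in C)) /= [X in (_ = X + _)%N]big1 ?add0n; last by move=> x xC; apply: N0.
  by apply: eq_bigl => x; rewrite inE.
have SD2 : (\sum_(x in ~: C) a x * a x = #|C| * k + #|C| * (#|C| - 1) * mu)%N.
  rewrite -N2 [RHS](bigID (fun x => x \in C)) /= [X in (_ = X + _)%N]big1 ?add0n; last by move=> x xC; rewrite N0.
  by apply: eq_bigl => x; rewrite inE.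
have cardD : #|~: C| = (v - #|C|)%N by rewrite -Hv -(cardsC C) addKn.
have cle : (#|C| <= v)%N by rewrite -Hv max_card.
have hcR : #|C|%:R * (sq + k%:R) = v%:R * sq :> R.
  rewrite Hc; field; apply/eqP => h; lra.
have vR : (v%:R - 1) * mu%:R + k%:R = k%:R * k%:R :> R.
  have -> : v%:R - 1 = (v - 1)%:R :> R by rewrite natrB.
  by rewrite -[RHS]natrM -N3 natrD natrM.
have kpos : 0 <= k%:R :> R by [].
have cmu : #|C|%:R * mu%:R = sq * (k%:R - sq) :> R.
  have := @alg_hoff _ _ _ _ _ _ hcR vR ksig; move/eqP; rewrite mulf_eq0 => /orP [/eqP h|/eqP h]; first by exfalso; lra.
  by apply/eqP; rewrite -subr_eq0 h.
have cpos : (0 < #|C|)%N.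
  rewrite lt0n; apply/negP => /eqP c0; move: hcR; rewrite c0 mul0r => h.
  have : 0 < v%:R :> R by rewrite ltr0n.
  move=> hv; have : 0 < v%:R * sq :> R by rewrite mulr_gt0.
  by rewrite -h ltxx.
have VAR0 : \sum_(x in ~: C) ((a x)%:R - sq) ^+ 2 = (\sum_(x in ~: C) (a x * a x)%:R)
   - 2 * sq * (\sum_(x in ~: C) (a x)%:R) + sq ^+ 2 * #|~: C|%:R :> R.
  rewrite mulr_sumr -sumrN mulr_natr -sumr_const -!big_split /=.
  by apply: eq_bigr => x _; rewrite natrM; ring.
have VAR : \sum_(x in ~: C) ((a x)%:R - sq) ^+ 2 = 0 :> R.
  rewrite VAR0 -!natr_sum SD1 SD2 cardD !natrD !natrM !natrB //.
  by apply: (@alg_var _ _ _ _ _ _ hcR cmu ksig).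
have aD x : x \in ~: C -> (a x)%:R = sq :> R.
  move=> xD; have h := psumr_eq0P (fun y _ => sqr_ge0 ((a y)%:R - sq)) VAR xD.
  by apply/eqP; rewrite -subr_eq0 -sqrf_eq0; apply/eqP.
set sg := a x0.
have sqE : sq = sg%:R by rewrite (aD x0 x0D).
have aDn x : x \in ~: C -> a x = sg.
  by move=> xD; apply/eqP; rewrite -(eqr_nat R) (aD x xD) sqE.
have sg_pos : (0 < sg)%N by rewrite -(ltr0n R) -sqE.
have Kk : (K + sg = k)%N.
  rewrite -(hdeg x0) (@card_split _ (e x0) C) -(HK x0 x0D) addnC; congr (_ + _)%N.
have sqK : sq ^+ 2 = K%:R - l1%:R.
  rewrite sqr_sqrtr //; apply: ltW; rewrite -sqrtr_gt0; exact: sq_pos.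
have Kl1 : (sg * sg + l1 = K)%N.
  apply/eqP; rewrite -(eqr_nat R) natrD natrM -sqE -expr2 sqK; apply/eqP; ring.
have kmu : (sg * sg + mu = k)%N.
  apply/eqP; rewrite -(eqr_nat R) natrD natrM -sqE -expr2 ksig; apply/eqP; ring.
have laml1 : (lam = l1 + sg)%N by lia.
pose S x := [set z in C | e x z].
have cardS x : x \in ~: C -> #|S x| = sg by apply: aDn.
have comD x y : x \in ~: C -> y \in ~: C -> x != y ->
    (common_nbrs e (~: C) x y + #|S x :&: S y| = lam)%N.
  move=> xD yD xy.
  have h := @card_split _ (fun z => e x z && e y z) C.
  rewrite hlm -(comm x y xy) h addnC; congr (_ + _)%N.
  by apply: eq_card => z; rewrite !inE; case: (z \in C); case: (e x z).
have hcov : cover P = ~: C by apply/eqP; case/and3P: HP.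
have trivP : trivIset P by case/and3P: HP.
set cls := pblock P x0.
have x0cls : x0 \in cls by rewrite mem_pblock hcov.
have clsP : cls \in P by rewrite pblock_mem // hcov.
have clsn : #|cls| = n by apply: HPn.
have clsD y : y \in cls -> y \in ~: C.
  move=> ycls; have := partitionS HP clsP; move/subsetP; apply; exact ycls.
have clsS y : y \in cls -> S y = S x0.
  move=> ycls; case: (eqVneq y x0) => [-> //|yx].
  have yD := clsD y ycls.
  have hc := HPc y x0 yD x0D yx.
  rewrite (same_pblock trivP ycls) eqxx in hc.
  have hI : #|S y :&: S x0| = sg.
    by have := comD y x0 yD x0D yx; rewrite hc laml1 => /eqP; rewrite eqn_add2l => /eqP.
  have e1 : S y :&: S x0 = S y.
    by apply/eqP; rewrite eqEcard subsetIl hI (cardS y yD) leqnn.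
  have e2 : S y :&: S x0 = S x0.
    by apply/eqP; rewrite eqEcard subsetIr hI (cardS x0 x0D) leqnn.
  by rewrite -e1 e2.
have hS y z : y \in cls -> z \in S x0 -> e y z.
  by move=> ycls; rewrite -(clsS y ycls) inE => /andP [].
pose Dm := ~: C :\: cls.
have DmP y : (y \in Dm) = (y \in ~: C) && (y \notin cls) by rewrite !inE andbC.
have other y : y \in Dm -> (#|S x0 :&: S y| + l2 = lam)%N.
  rewrite DmP => /andP [yD ycls].
  have x0y : x0 != y by apply/eqP => h; rewrite -h x0cls in ycls.
  have hc := HPc x0 y x0D yD x0y.
  have : (pblock P x0 == pblock P y) = false.
    by rewrite eq_pblock // ?hcov // (negPf ycls).
  move=> hf; rewrite hf in hc.
  by rewrite -(comD x0 y x0D yD x0y) hc addnC.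
have cardDsub (A B : {set T}) : B \subset A -> (#|A :\: B| + #|B| = #|A|)%N.
  by move=> BA; rewrite cardsD (setIidPr BA) subnK // subset_leq_card.
have [y1 y1Dm] : exists y, y \in Dm.
  have : Dm != set0.
    apply/negP => /eqP D0.
    have Pcls : P = [set cls].
      apply/setP => B; rewrite inE; apply/idP/eqP => [BP|->//].
      have /set0Pn [y yB] := partition_neq0 HP BP.
      have yD : y \in ~: C by move/subsetP: (partitionS HP BP); apply.
      have ycls : y \in cls.
        apply/negPn/negP => h.
        have : y \in Dm by rewrite DmP yD h.
        by rewrite D0 inE.
      by rewrite -(def_pblock trivP BP yB) (same_pblock trivP ycls).
    by move: Hm1; rewrite -HPm Pcls cards1.
  by case/set0Pn => y; exists y.
have y1D : y1 \in ~: C by move: y1Dm; rewrite DmP => /andP [].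
have csg : #|C| != sg.
  apply/eqP => csg.
  have SC x : x \in ~: C -> S x = C.
    move=> xD; apply/eqP; rewrite eqEcard (cardS x xD) csg leqnn andbT.
    by apply/subsetP => z; rewrite inE => /andP [].
  have := other y1 y1Dm; rewrite (SC x0 x0D) (SC y1 y1D) setIid csg laml1 addnC => /eqP.
  by rewrite eqn_add2r eq_sym (negPf Hl12).
have S0C z : z \in S x0 -> z \in C by rewrite inE => /andP [].
have Fz z : z \in S x0 -> (#|[set y | (y \in Dm) && ((z \in S x0) && e y z)]| + n = k)%N.
  move=> zS.
  have -> : [set y | (y \in Dm) && ((z \in S x0) && e y z)] = [set y | e y z] :\: cls.
    rewrite zS /=; apply/setP => y; rewrite !inE.
    case eyz: (e y z); last by rewrite !andbF.
    have := hND y z (S0C z zS) eyz; rewrite inE => ->.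
    by rewrite !andbT.
  rewrite -clsn cardDsub ?degz //.
  by apply/subsetP => y ycls; rewrite inE hS.
have Gzw z w : z \in S x0 -> w \in S x0 -> w != z ->
   (#|[set y | [&& y \in Dm, (z \in S x0) && e y z & (w \in S x0) && e y w]]| + n = mu)%N.
  move=> zS wS wz.
  have -> : [set y | [&& y \in Dm, (z \in S x0) && e y z & (w \in S x0) && e y w]]
      = [set y | e y z && e y w] :\: cls.
    rewrite zS wS /=; apply/setP => y; rewrite !inE.
    case eyz: (e y z); last by rewrite !andbF.
    have := hND y z (S0C z zS) eyz; rewrite inE => ->.
    by rewrite !andbT andbC.
  rewrite -clsn cardDsub.
    rewrite -(comm z w); last by rewrite eq_sym.
    by apply: eq_card => y; rewrite !inE !(esymb y).
  by apply/subsetP => y ycls; rewrite inE !hS.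
have cardSx0 : #|S x0| = sg by exact: cardS x0 x0D.
have eqI y : #|S x0 :&: S y| = #|[set z | (z \in S x0) && e y z]|.
  apply: eq_card => z; rewrite !inE.
  by case zC: (z \in C); case: (e x0 z).
have E3 : \sum_(y in Dm) (#|S x0 :&: S y|)%:R = sq * (k%:R - n%:R) :> R.
  rewrite -natr_sum (eq_bigr _ (fun y _ => eqI y)).
  rewrite (@dc1c _ (fun y => y \in Dm) (fun y z => (z \in S x0) && e y z)) natr_sum.
  rewrite (bigID (fun z => z \in S x0)) /= [X in _ + X]big1 ?addr0; last first.
    move=> z /negPf zS; apply/eqP; rewrite pnatr_eq0 cards_eq0 zS; apply/eqP/setP => y.
    by rewrite !inE andbF.
  rewrite (eq_bigr (fun _ => k%:R - n%:R)); last first.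
    by move=> z zS; rewrite -(Fz z zS) natrD addrK.
  by rewrite sumr_const cardSx0 sqE mulr_natl.
have E4 : \sum_(y in Dm) (#|S x0 :&: S y| * #|S x0 :&: S y|)%:R
    = sq * ((k%:R - n%:R) + (sq - 1) * (mu%:R - n%:R)) :> R.
  rewrite -natr_sum (eq_bigr _ (fun y _ => congr2 muln (eqI y) (eqI y))).
  rewrite (@dc2c _ (fun y => y \in Dm) (fun y z => (z \in S x0) && e y z)
             (fun y z => (z \in S x0) && e y z)) natr_sum.
  rewrite (bigID (fun z => z \in S x0)) /= [X in _ + X]big1 ?addr0; last first.
    move=> z /negPf zS; apply/eqP; rewrite pnatr_eq0; apply/eqP; apply: big1 => w _.
    apply/eqP; rewrite cards_eq0 zS; apply/eqP/setP => y.
    by rewrite !inE andbF.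
  rewrite (eq_bigr (fun _ => (k%:R - n%:R) + (sq - 1) * (mu%:R - n%:R))); last first.
    move=> z zS; rewrite natr_sum (bigD1 z) //=; congr (_ + _).
      have -> : #|[set y | [&& y \in Dm, (z \in S x0) && e y z & (z \in S x0) && e y z]]|
          = #|[set y | (y \in Dm) && ((z \in S x0) && e y z)]| by apply: eq_card => y; rewrite !inE andbb.
      by rewrite -(Fz z zS) natrD addrK.
    rewrite (bigID (fun w => w \in S x0)) /= [X in _ + X]big1 ?addr0; last first.
      move=> w /andP [_ /negPf wS]; apply/eqP; rewrite pnatr_eq0 cards_eq0 wS; apply/eqP/setP => y.
      by rewrite !inE !andbF.
    rewrite (eq_bigr (fun _ => mu%:R - n%:R)); last first.
      by move=> w /andP [wz wS]; rewrite -(Gzw z w zS wS wz) natrD addrK.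
    rewrite (eq_bigl (fun w => w \in S x0 :\ z)); last by move=> w; rewrite !inE andbC.
    have cz : #|S x0 :\ z| = (sg - 1)%N.
      by have := cardsD1 z (S x0); rewrite zS cardSx0 add1n => ->; rewrite subn1.
    rewrite sumr_const cz -(mulr_natl (mu%:R - n%:R : R) (sg - 1)%N) natrB ?sqE //.
  by rewrite sumr_const cardSx0 sqE mulr_natl.
have l2le : (l2 <= lam)%N by have := other y1 y1Dm => <-; apply: leq_addl.
have tauE y : y \in Dm -> #|S x0 :&: S y| = (lam - l2)%N.
  by move=> yDm; rewrite -(other y yDm) addnK.
have clsDsub : cls \subset ~: C by apply/subsetP => y; apply: clsD.
have cardDm : (#|Dm| + n = V)%N by rewrite -clsn cardDsub // HV.
have VnR : (#|Dm|%:R : R) = V%:R - n%:R by rewrite -cardDm natrD addrK.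
set tau := (lam - l2)%N.
have h1 : (V%:R - n%:R) * tau%:R = sq * (k%:R - n%:R) :> R.
  rewrite -E3 (eq_bigr (fun _ => tau%:R)); last by move=> y yDm; rewrite tauE.
  by rewrite sumr_const -VnR mulr_natl.
have h2 : (V%:R - n%:R) * tau%:R ^+ 2 = sq * (k%:R - n%:R) + sq * (sq - 1) * (mu%:R - n%:R) :> R.
  have -> : sq * (k%:R - n%:R) + sq * (sq - 1) * (mu%:R - n%:R)
     = sq * ((k%:R - n%:R) + (sq - 1) * (mu%:R - n%:R)) by ring.
  rewrite -E4 (eq_bigr (fun _ => tau%:R ^+ 2)); last by move=> y yDm; rewrite tauE // expr2 -natrM.
  by rewrite sumr_const -VnR mulr_natl.
have h3n : (#|~: C| * sg = #|C| * k)%N.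
  by rewrite -SD1 -sum_nat_const; apply: eq_bigr => x xD; rewrite aDn.
have h3 : V%:R * sq = #|C|%:R * k%:R :> R by rewrite -HV sqE -!natrM h3n.
have h4 := @alg_h4 _ _ _ _ _ cmu ksig.
have hm := @alg_main _ _ _ _ _ _ _ _ h1 h2 h3 h4.
have kpos' : (0 < k)%N by rewrite -kmu; apply: leq_trans (leq_addr _ _); rewrite muln_gt0 sg_pos.
have csq : #|C|%:R - sq != 0 :> R.
  by rewrite subr_eq0 sqE eqr_nat.
have kn : k%:R = sq * n%:R :> R.
  move/eqP: hm; rewrite !mulf_eq0 (negPf csq) !orbF gt_eqF // pnatr_eq0 (gtn_eqF kpos') /=.
  by rewrite subr_eq0 => /eqP.
have n_pos : (0 < n)%N by rewrite -clsn; apply/card_gt0P; exists x0.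
have Vmn : V = (m * n)%N.
  rewrite -HV -HPm.
  rewrite (card_partition HP) (eq_bigr (fun _ => n)); last by move=> B BP; apply: HPn.
  by rewrite sum_nat_const.
have cm : #|C| = m.
  apply/eqP; rewrite -(eqr_nat R) -subr_eq0.
  have : (m%:R - #|C|%:R) * (sq * n%:R) = 0 :> R.
    by move: h3; rewrite Vmn natrM kn => h; rewrite mulrBl -h; ring.
  move/eqP; rewrite mulf_eq0 mulf_eq0 (gt_eqF sq_pos) pnatr_eq0 (gtn_eqF n_pos) !orbF.
  by rewrite -opprB oppr_eq0.
have muE : mu%:R = sq * (n%:R - sq) :> R.
  by apply/eqP; rewrite -subr_eq0; apply/eqP; rewrite mulrBr -kn -expr2 ksig; ring.
have mupos : 0 < mu%:R :> R.
  by rewrite ltr0n -hlm laml1; apply: leq_trans sg_pos (leq_addl _ _).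
have nsq : n%:R - sq != 0 :> R.
  by apply/eqP => h; move: mupos; rewrite muE h mulr0 ltxx.
have hv := @alg_v _ _ _ _ _ _ vR muE kn.
have vE : v%:R * (n%:R - sq) = sq * (n%:R ^+ 2 - 1) :> R.
  move/eqP: hv; rewrite mulf_eq0 gt_eqF //= subr_eq0 => /eqP //.
split.
- exact: cm.
- rewrite opprK; apply: (canRL (mulfK nsq)); exact: vE.
- by rewrite opprK.
- by rewrite opprK hlm.
- by rewrite opprK.
Qed.
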